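(* Let $\Gamma$ be a maximal consistent set of SBTrust, and let $\varphi,\psi$ be propositional formulas with $\psi\notin\rightsquigarrow_\varphi(\Gamma)$. Then there exists a maximal consistent set $\Delta\in[\Gamma]_\leftrightsquigarrow$ such that $\{\neg\psi\}\cup\rightsquigarrow_\varphi(\Gamma)\subseteq\Delta$.
   Context: $\mathcal{L}_T$: $\alpha::=\varphi\mid\varphi\rightsquigarrow\varphi\mid B(\alpha)\mid\alpha*\alpha\mid\neg\alpha$, with $\varphi$ ranging over classical propositional formulas (built from variables, $\bot$, $\land,\lor,\to,\leftrightarrow,\neg$) and $*\in\{\land,\lor,\to,\leftrightarrow\}$. SBTrust is the Hilbert system ($\varphi,\psi,\chi,\varphi_i,\psi_i$ propositional; $\alpha,\beta\in\mathcal{L}_T$; rule outputs must lie in $\mathcal{L}_T$): classical tautologies and Modus Ponens; $\varphi\rightsquigarrow\varphi$; $(\varphi\rightsquigarrow\bot)\to\neg\varphi$; $((\psi\land\chi)\rightsquigarrow\varphi)\to(\psi\rightsquigarrow(\chi\to\varphi))$; $(\neg(\varphi\leftrightarrow\psi)\rightsquigarrow\bot)\to((\varphi\rightsquigarrow\chi)\leftrightarrow(\psi\rightsquigarrow\chi))$; rule RCK: from $(\varphi_1\land\dots\land\varphi_n)\to\varphi_{n+1}$ infer $\bigwedge_{j\le n}(\psi\rightsquigarrow\varphi_j)\to(\psi\rightsquigarrow\varphi_{n+1})$; rule $\mathbf{S5_F}$: from $(\ell_1\land\dots\land\ell_n)\to\chi$ infer $(\ell_1\land\dots\land\ell_n)\to(\neg\chi\rightsquigarrow\bot)$,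 each $\ell_j$ being $\varphi_j\rightsquigarrow\psi_j$ or its negation, $\chi$ propositional; $B(\alpha\to\beta)\to(B\alpha\to B\beta)$; $B\alpha\to\neg B\neg\alpha$; $B\alpha\to BB\alpha$; necessitation for $B$. A maximal consistent set (MCS) is $\Gamma\subseteq\mathcal{L}_T$ with $\Gamma\nvdash\bot$ and, for every $\alpha\in\mathcal{L}_T$, $\alpha\in\Gamma$ or $\neg\alpha\in\Gamma$. For $\Gamma\subseteq\mathcal{L}_T$: $\Gamma^\rightsquigarrow$ is the set of formulas of the form $\chi\rightsquigarrow\psi$ in $\Gamma$; for MCSs, $\Gamma\leftrightsquigarrow\Delta$ iff $\Gamma^\rightsquigarrow=\Delta^\rightsquigarrow$ (an equivalence relation), and $[\Gamma]_\leftrightsquigarrow$ is the equivalence class of $\Gamma$; $\rightsquigarrow_\varphi(\Gamma)=\{\psi:\varphi\rightsquigarrow\psi\in\Gamma\}$. *)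

(* Defs.v *)
From Stdlib Require Import List.
Import ListNotations.

Inductive pform : Type :=
| PVar : nat -> pform
| PBot : pform
| PAnd : pform -> pform -> pform
| POr  : pform -> pform -> pform
| PImp : pform -> pform -> pform
| PIff : pform -> pform -> pform
| PNeg : pform -> pform.

(* The language L_T.  Propositional formulas are embedded via [emb];
   the connectives of L_T are shared with the propositional ones, so
   L_T is exactly the type [tform] without syntactic ambiguity. *)
Inductive tform : Type :=
| TVar : nat -> tform
| TBot : tform
| TAnd : tform -> tform -> tform
| TOr  : tform -> tform -> tform
| TImp : tform -> tform -> tform
| TIff : tform -> tform -> tform
| TNeg : tform -> tform
| TTr  : pform -> pform -> tform
| TB   : tform -> tform.

Fixpoint emb (p : pform) : tform :=
  match p with
  | PVar n => TVar n
  | PBot => TBot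
  | PAnd a b => TAnd (emb a) (emb b)
  | POr a b => TOr (emb a) (emb b)
  | PImp a b => TImp (emb a) (emb b)
  | PIff a b => TIff (emb a) (emb b)
  | PNeg a => TNeg (emb a)
  end.

Fixpoint teval (vp : nat -> bool) (vt : pform -> pform -> bool)
  (vb : tform -> bool) (a : tform) : bool :=
  match a with
  | TVar n => vp n
  | TBot => false
  | TAnd x y => andb (teval vp vt vb x) (teval vp vt vb y)
  | TOr x y => orb (teval vp vt vb x) (teval vp vt vb y)
  | TImp x y => orb (negb (teval vp vt vb x)) (teval vp vt vb y)
  | TIff x y => Bool.eqb (teval vp vt vb x) (teval vp vt vb y)
  | TNeg x => negb (teval vp vt vb x)
  | TTr p q => vt p q
  | TB x => vb x
  end.

(* Instances (in L_T) of classical tautologies *)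
Definition tautology (a : tform) : Prop :=
  forall vp vt vb, teval vp vt vb a = true.

Fixpoint pconj (x : pform) (xs : list pform) : pform :=
  match xs with
  | [] => x
  | y :: ys => PAnd x (pconj y ys)
  end.

Fixpoint tconj (x : tform) (xs : list tform) : tform :=
  match xs with
  | [] => x
  | y :: ys => TAnd x (tconj y ys)
  end.

Inductive lit : Type :=
| LPos : pform -> pform -> lit
| LNeg : pform -> pform -> lit.

Definition lit_form (l : lit) : tform :=
  match l with
  | LPos p q => TTr p q
  | LNeg p q => TNeg (TTr p q)
  end.

Inductive thm : tform -> Prop :=
| ax_taut : forall a, tautology a -> thm a
| r_mp : forall a b, thm (TImp a b) -> thm a -> thm b
| ax_id : forall p, thm (TTr p p)
| ax_bot : forall p, thm (TImp (TTr p PBot) (TNeg (emb p)))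
| ax_imp : forall p q c,
    thm (TImp (TTr (PAnd q c) p) (TTr q (PImp c p)))
| ax_eq : forall p q c,
    thm (TImp (TTr (PNeg (PIff p q)) PBot) (TIff (TTr p c) (TTr q c)))
| r_rck : forall (q p1 p : pform) (ps : list pform),
    thm (emb (PImp (pconj p1 ps) p)) ->
    thm (TImp (tconj (TTr q p1) (map (TTr q) ps)) (TTr q p))
| r_s5f : forall (l1 : lit) (ls : list lit) (c : pform),
    thm (TImp (tconj (lit_form l1) (map lit_form ls)) (emb c)) ->
    thm (TImp (tconj (lit_form l1) (map lit_form ls)) (TTr (PNeg c) PBot))
| ax_K : forall a b, thm (TImp (TB (TImp a b)) (TImp (TB a) (TB b)))
| ax_D : forall a, thm (TImp (TB a) (TNeg (TB (TNeg a))))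
| ax_4 : forall a, thm (TImp (TB a) (TB (TB a)))
| r_nec : forall a, thm a -> thm (TB a).

Fixpoint imps (l : list tform) (b : tform) : tform :=
  match l with
  | [] => b
  | x :: xs => TImp x (imps xs b)
  end.

Definition derives (G : tform -> Prop) (a : tform) : Prop :=
  exists l, (forall x, In x l -> G x) /\ thm (imps l a).

Definition MCS (G : tform -> Prop) : Prop :=
  ~ derives G TBot /\ forall a, G a \/ G (TNeg a).

Definition tr_equiv (G D : tform -> Prop) : Prop :=
  forall p q, G (TTr p q) <-> D (TTr p q).

Definition tr_succ (p : pform) (G : tform -> Prop) : pform -> Prop :=
  fun q => G (TTr p q).

(* Main.v *)
Require Import Defs.
From Stdlib Require Import List Bool Classical ClassicalEpsilon Cantor PeanoNat Lia.
Import ListNotations.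

Section Sem.
Variables (vp : nat -> bool) (vt : pform -> pform -> bool) (vb : tform -> bool).
Notation V := (teval vp vt vb).

Lemma imps_eval l c :
  V (imps l c) = true <-> ((forall x, In x l -> V x = true) -> V c = true).
Proof.
  induction l as [|a l IH]; simpl.
  - split; auto. 
  - rewrite orb_true_iff, negb_true_iff, IH. split.
    + intros [H|H] Hall.
      * rewrite (Hall a (or_introl eq_refl)) in H; discriminate.
      * apply H; intros; apply Hall; auto.
    + intros H. destruct (V a) eqn:E; [right|left; reflexivity].
      intros Hl; apply H; intros x [<-|Hx]; auto.
Qed.

Lemma tconj_eval x xs :
  V (tconj x xs) = true <-> V x = true /\ forall y, In y xs -> V y = true.
Proof.
  revert x; induction xs as [|y ys IH]; intros x; simpl.
  - split; [intros; split; tauto | tauto].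
  - rewrite andb_true_iff, IH. split.
    + intros [H1 [H2 H3]]; split; auto. intros z [<-|Hz]; auto.
    + intros [H1 H2]; split; auto.
Qed.
End Sem.

Lemma thm_mps ts c : (forall t, In t ts -> thm t) -> thm (imps ts c) -> thm c.
Proof.
  induction ts as [|t ts IH]; simpl; auto.
  intros H Hi. apply IH; auto. eapply r_mp; eauto.
Qed.

Lemma thm_taut_mp ts c : (forall t, In t ts -> thm t) -> tautology (imps ts c) -> thm c.
Proof. intros H Ht. apply (thm_mps ts); auto. apply ax_taut; auto. Qed.

Lemma derives_thm G a : thm a -> derives G a.
Proof. intros H; exists []; split; simpl; tauto. Qed.

Lemma derives_in G a : G a -> derives G a.
Proof.
  intros H; exists [a]; split. simpl; intros x [<-|[]]; auto.
  apply ax_taut; intros vp vt vb; simpl; destruct (teval vp vt vb a); reflexivity.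
Qed.

Lemma derives_mp G a b : derives G (TImp a b) -> derives G a -> derives G b.
Proof.
  intros [l1 [H1 T1]] [l2 [H2 T2]]. exists (l1 ++ l2); split.
  - intros x Hx; apply in_app_or in Hx; destruct Hx; auto.
  - apply (thm_taut_mp [imps l1 (TImp a b); imps l2 a]).
    + simpl; intros t [<-|[<-|[]]]; auto.
    + intros vp vt vb. rewrite imps_eval. intros H.
      assert (E1 := H _ (or_introl eq_refl)). assert (E2 := H _ (or_intror (or_introl eq_refl))).
      rewrite imps_eval in E1, E2. rewrite imps_eval. intros Hall.
      assert (Ha : teval vp vt vb a = true) by (apply E2; intros; apply Hall; apply in_or_app; auto).
      assert (Hab := E1 (fun x Hx => Hall x (in_or_app _ _ _ (or_introl Hx)))).
      simpl in Hab. rewrite Ha in Hab. exact Hab.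
Qed.

Lemma derives_taut_mp G ts c :
  (forall t, In t ts -> derives G t) -> tautology (imps ts c) -> derives G c.
Proof.
  intros H Ht. assert (D : derives G (imps ts c)) by (apply derives_thm, ax_taut, Ht).
  clear Ht. induction ts as [|t ts IH]; simpl in *; auto.
  apply IH. intros; apply H; auto. eapply derives_mp; eauto.
Qed.

Lemma derives_mono (G G' : tform -> Prop) a : (forall x, G x -> G' x) -> derives G a -> derives G' a.
Proof. intros H [l [Hl T]]; exists l; split; auto. Qed.

Lemma derives_ded G a b : derives (fun y => G y \/ y = a) b -> derives G (TImp a b).
Proof.
  intros [l [Hl T]].
  assert (Ex : exists l', (forall x, In x l' -> G x) /\ forall x, In x l -> In x l' \/ x = a).
  { clear T. induction l as [|y l IH].
    - exists []; simpl; split; tauto.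
    - destruct IH as [l' [H1 H2]]. intros; apply Hl; simpl; auto.
      destruct (Hl y (or_introl eq_refl)) as [Gy|Ey].
      + exists (y :: l'); split. simpl; intros x [<-|Hx]; auto.
        simpl; intros x [<-|Hx]; auto. destruct (H2 x Hx); auto.
      + exists l'; split; auto. simpl; intros x [<-|Hx]; auto. }
  destruct Ex as [l' [H1 H2]]. exists l'; split; auto.
  apply (thm_taut_mp [imps l b]). simpl; intros t [<-|[]]; auto.
  intros vp vt vb. rewrite !imps_eval. intros H Hall.
  assert (E := H _ (or_introl eq_refl)). rewrite imps_eval in E. simpl.
  destruct (teval vp vt vb a) eqn:Ea; simpl; auto.
  apply E. intros x Hx. destruct (H2 x Hx) as [h| ->]; auto.
Qed.

Lemma to_nat_inj p q : to_nat p = to_nat q -> p = q.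
Proof. intros H. rewrite <- (cancel_of_to p), <- (cancel_of_to q), H. reflexivity. Qed.

Fixpoint encp (p : pform) : nat :=
  match p with
  | PVar n => to_nat (0, n)
  | PBot => to_nat (1, 0)
  | PAnd a b => to_nat (2, to_nat (encp a, encp b))
  | POr a b => to_nat (3, to_nat (encp a, encp b))
  | PImp a b => to_nat (4, to_nat (encp a, encp b))
  | PIff a b => to_nat (5, to_nat (encp a, encp b))
  | PNeg a => to_nat (6, encp a)
  end.

Fixpoint enct (p : tform) : nat :=
  match p with
  | TVar n => to_nat (0, n)
  | TBot => to_nat (1, 0)
  | TAnd a b => to_nat (2, to_nat (enct a, enct b))
  | TOr a b => to_nat (3, to_nat (enct a, enct b))
  | TImp a b => to_nat (4, to_nat (enct a, enct b))
  | TIff a b => to_nat (5, to_nat (enct a, enct b))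
  | TNeg a => to_nat (6, enct a)
  | TTr a b => to_nat (7, to_nat (encp a, encp b))
  | TB a => to_nat (8, enct a)
  end.

Lemma pr_inj a b c d : to_nat (a, b) = to_nat (c, d) -> a = c /\ b = d.
Proof. intros H; apply to_nat_inj in H; inversion H; auto. Qed.
Ltac inj_tac := repeat match goal with
  | H : to_nat _ = to_nat _ |- _ => apply pr_inj in H; destruct H
  end.

Lemma encp_inj p q : encp p = encp q -> p = q.
Proof.
  revert q; induction p; intros q; destruct q; cbn [encp enct] in *; intros H; inj_tac;
  try discriminate; subst; try reflexivity; f_equal; auto.
Qed.

Lemma enct_inj p q : enct p = enct q -> p = q.
Proof.
  revert q; induction p; intros q; destruct q; cbn [encp enct] in *; intros H; inj_tac;
  try discriminate; subst; try reflexivity; f_equal; auto using encp_inj.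
Qed.

Definition dec (n : nat) : tform := epsilon (inhabits TBot) (fun a => enct a = n).

Lemma dec_surj a : dec (enct a) = a.
Proof.
  apply enct_inj. unfold dec. apply (epsilon_spec (inhabits TBot) (fun b => enct b = enct a)).
  exists a; reflexivity.
Qed.

Section Lind.
Variable S : tform -> Prop.

Fixpoint ch (n : nat) : tform -> Prop :=
  match n with
  | 0 => S
  | Datatypes.S n => fun x => ch n x \/
      (x = dec n /\ ~ derives (fun y => ch n y \/ y = dec n) TBot) \/
      (x = TNeg (dec n) /\ derives (fun y => ch n y \/ y = dec n) TBot)
  end.

Lemma ch_mono n m x : n <= m -> ch n x -> ch m x.
Proof. induction 1; simpl; auto. Qed.

Lemma ch_cons n : ~ derives S TBot -> ~ derives (ch n) TBot.
Proof.
  intros H0. induction n as [|n IH]; simpl; auto.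
  destruct (classic (derives (fun y => ch n y \/ y = dec n) TBot)) as [D|D].
  - intros D2. apply IH.
    assert (D3 : derives (fun y => ch n y \/ y = TNeg (dec n)) TBot).
    { eapply derives_mono; [|exact D2]. intros x [h|[[_ h]|[-> _]]]; auto; tauto. }
    apply derives_ded in D, D3.
    apply (derives_taut_mp _ [TImp (dec n) TBot; TImp (TNeg (dec n)) TBot]).
    + simpl; intros t [<-|[<-|[]]]; auto.
    + intros vp vt vb; simpl. destruct (teval vp vt vb (dec n)); reflexivity.
  - intros D2. apply D. eapply derives_mono; [|exact D2].
    intros x [h|[[-> _]|[_ h]]]; auto; tauto.
Qed.

Definition lim x := exists n, ch n x.

Lemma lindenbaum : ~ derives S TBot -> (forall x, S x -> lim x) /\ MCS lim.
Proof.
  intros H0. split; [intros x Hx; exists 0; exact Hx|split].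
  - intros [l [Hl T]].
    assert (Ex : exists N, forall x, In x l -> ch N x).
    { clear T. induction l as [|y l IH].
      - exists 0; simpl; tauto.
      - destruct IH as [N HN]. intros; apply Hl; simpl; auto.
        destruct (Hl y (or_introl eq_refl)) as [m Hm].
        exists (N + m). simpl; intros x [<-|Hx].
        + eapply ch_mono; [|exact Hm]; lia.
        + eapply ch_mono; [|apply HN; exact Hx]; lia. }
    destruct Ex as [N HN]. apply (ch_cons N H0). exists l; auto.
  - intros a.
    destruct (classic (derives (fun y => ch (enct a) y \/ y = a) TBot)); [right|left]; exists (Datatypes.S (enct a)); simpl; rewrite dec_surj; auto.
Qed.
End Lind.

Lemma mcs_derives G a : MCS G -> derives G a -> G a.
Proof.
  intros [HC HM] D. destruct (HM a) as [h|h]; auto. exfalso; apply HC.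
  apply (derives_taut_mp _ [a; TNeg a]).
  - simpl; intros t [<-|[<-|[]]]; auto using derives_in.
  - intros vp vt vb; simpl; destruct (teval vp vt vb a); reflexivity.
Qed.

Lemma mcs_not_both G a : MCS G -> G a -> G (TNeg a) -> False.
Proof.
  intros [HC HM] h1 h2. apply HC.
  apply (derives_taut_mp _ [a; TNeg a]).
  - simpl; intros t [<-|[<-|[]]]; auto using derives_in.
  - intros vp vt vb; simpl; destruct (teval vp vt vb a); reflexivity.
Qed.

Fixpoint pimps (cs : list pform) (p : pform) : pform :=
  match cs with [] => p | c :: cs => PImp c (pimps cs p) end.

Lemma emb_pimps cs p : emb (pimps cs p) = imps (map emb cs) (emb p).
Proof. induction cs; simpl; congruence. Qed.

Lemma emb_pconj x xs : emb (pconj x xs) = tconj (emb x) (map emb xs).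
Proof. revert x; induction xs; intros; simpl; congruence. Qed.

Theorem lemma1 (G : tform -> Prop) (phi psi : pform) :
  MCS G -> ~ tr_succ phi G psi ->
  exists D : tform -> Prop,
    MCS D /\ tr_equiv G D /\
    D (emb (PNeg psi)) /\
    (forall chi, tr_succ phi G chi -> D (emb chi)).
Proof.
  intros HG Hpsi. unfold tr_succ in *.
  set (S := fun x => (exists p q, x = TTr p q /\ G x) \/ (exists p q, x = TNeg (TTr p q) /\ G x)
       \/ x = emb (PNeg psi) \/ (exists chi, x = emb chi /\ G (TTr phi chi))).
  assert (Scons : ~ derives S TBot).
  { intros [l [Hl T]].
    assert (Ex : exists ls cs, (forall k, In k ls -> G (lit_form k)) /\
              (forall c, In c cs -> G (TTr phi c)) /\
              forall x, In x l -> In x (map lit_form ls) \/ In x (map emb cs) \/ x = emb (PNeg psi)).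
    { clear T. induction l as [|y l IH].
      - exists [], []; simpl; tauto.
      - destruct IH as [ls [cs [H1 [H2 H3]]]]. intros; apply Hl; simpl; auto.
        destruct (Hl y (or_introl eq_refl)) as [[p [q [-> Hy]]]|[[p [q [-> Hy]]]|[->|[chi [-> Hy]]]]].
        + exists (LPos p q :: ls), cs; repeat split; auto.
          * simpl; intros k [<-|Hk]; auto.
          * simpl; intros x [<-|Hx]; auto. destruct (H3 x Hx) as [h|[h|h]]; auto.
        + exists (LNeg p q :: ls), cs; repeat split; auto.
          * simpl; intros k [<-|Hk]; auto.
          * simpl; intros x [<-|Hx]; auto. destruct (H3 x Hx) as [h|[h|h]]; auto.
        + exists ls, cs; repeat split; auto.
          simpl; intros x [<-|Hx]; auto.
        + exists ls, (chi :: cs); repeat split; auto.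
          * simpl; intros c [<-|Hc]; auto.
          * simpl; intros x [<-|Hx]; auto. destruct (H3 x Hx) as [h|[h|h]]; auto. }
    destruct Ex as [ls [cs [H1 [H2 H3]]]].
    set (d := pimps cs psi).
    set (c' := PIff phi (PAnd phi d)).
    assert (T0 : thm (TImp (tconj (lit_form (LPos phi phi)) (map lit_form ls)) (emb c'))).
    { apply (thm_taut_mp [imps l TBot]). simpl; intros t [<-|[]]; auto.
      intros vp vt vb. rewrite imps_eval. intros H.
      specialize (H _ (or_introl eq_refl)). rewrite imps_eval in H. simpl in H.
      simpl teval at 1.
      destruct (teval vp vt vb (tconj (TTr phi phi) (map lit_form ls))) eqn:Et; [simpl|reflexivity].
      rewrite tconj_eval in Et. destruct Et as [_ Et].
      assert (Hd : teval vp vt vb (emb d) = true).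
      { unfold d. rewrite emb_pimps, imps_eval. intros Hc.
        destruct (teval vp vt vb (emb psi)) eqn:Ep; auto. exfalso.
        assert (false = true); [|discriminate]. apply H. intros x Hx.
        destruct (H3 x Hx) as [h|[h| ->]]; auto. simpl. rewrite Ep. reflexivity. }
      unfold c'. simpl. rewrite Hd. destruct (teval vp vt vb (emb phi)); reflexivity. }
    pose proof (r_s5f _ _ _ T0) as T1.
    pose proof (ax_eq phi (PAnd phi d) d) as T2.
    assert (T3 : thm (TTr (PAnd phi d) d)).
    { eapply r_mp; [apply (r_rck (PAnd phi d) (PAnd phi d) d [])|apply ax_id].
      apply ax_taut; intros vp vt vb; simpl.
      destruct (teval vp vt vb (emb phi)), (teval vp vt vb (emb d)); reflexivity. }
    assert (T4 : thm (TImp (tconj (TTr phi d) (map (TTr phi) cs)) (TTr phi psi))).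
    { apply r_rck. apply ax_taut; intros vp vt vb. simpl. rewrite emb_pconj.
      destruct (teval vp vt vb (tconj (emb d) (map emb cs))) eqn:E; [simpl|reflexivity].
      rewrite tconj_eval in E. destruct E as [E1 E2]. unfold d in E1.
      rewrite emb_pimps, imps_eval in E1. apply E1. intros x Hx.
      apply in_map_iff in Hx. destruct Hx as [c [<- Hc]]. apply E2. apply in_map; auto. }
    apply Hpsi. apply mcs_derives; auto.
    apply (derives_taut_mp _ ([TImp (tconj (lit_form (LPos phi phi)) (map lit_form ls)) (TTr (PNeg c') PBot);
        TImp (TTr (PNeg (PIff phi (PAnd phi d))) PBot) (TIff (TTr phi d) (TTr (PAnd phi d) d));
        TTr (PAnd phi d) d; TImp (tconj (TTr phi d) (map (TTr phi) cs)) (TTr phi psi)]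
        ++ TTr phi phi :: map lit_form ls ++ map (TTr phi) cs)).
    - intros t Ht. simpl in Ht. destruct Ht as [<-|[<-|[<-|[<-|Ht]]]]; try (apply derives_thm; assumption).
      apply derives_in. destruct Ht as [<-|Ht].
      + apply mcs_derives; auto. apply derives_thm, ax_id.
      + apply in_app_or in Ht. destruct Ht as [Ht|Ht]; apply in_map_iff in Ht; destruct Ht as [k [<- Hk]]; auto.
    - intros vp vt vb. rewrite imps_eval. intros H.
      assert (E1 := H _ (or_introl eq_refl)).
      assert (E2 := H _ (or_intror (or_introl eq_refl))).
      assert (E3 := H _ (or_intror (or_intror (or_introl eq_refl)))).
      assert (E4 := H _ (or_intror (or_intror (or_intror (or_introl eq_refl))))).
      assert (Eid := H (TTr phi phi) ltac:(simpl; tauto)).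
      assert (El : forall k, In k ls -> teval vp vt vb (lit_form k) = true).
      { intros k Hk. apply H. simpl. right; right; right; right; right. apply in_or_app; left. apply in_map; auto. }
      assert (Ec : forall c, In c cs -> teval vp vt vb (TTr phi c) = true).
      { intros c Hc. apply H. simpl. right; right; right; right; right. apply in_or_app; right. apply in_map; auto. }
      cbn [teval lit_form] in E1, E2, E3, E4, Eid.
      assert (Ta : teval vp vt vb (tconj (TTr phi phi) (map lit_form ls)) = true).
      { rewrite tconj_eval. split; auto. intros y Hy. apply in_map_iff in Hy. destruct Hy as [k [<- Hk]]; auto. }
      rewrite Ta in E1. simpl in E1. fold c' in E2. rewrite E1 in E2. simpl in E2.
      rewrite E3 in E2. assert (Hpd : vt phi d = true) by (destruct (vt phi d); [reflexivity|discriminate]).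
      assert (Tb : teval vp vt vb (tconj (TTr phi d) (map (TTr phi) cs)) = true).
      { rewrite tconj_eval. split; [exact Hpd|]. intros y Hy. apply in_map_iff in Hy. destruct Hy as [k [<- Hk]]; auto. }
      rewrite Tb in E4. exact E4. }
  destruct (lindenbaum S Scons) as [Hsub HD].
  exists (lim S). split; [exact HD|]. split; [|split].
  - intros p q; split; intros h.
    + apply Hsub. left; exists p, q; auto.
    + destruct (proj2 HG (TTr p q)) as [h'|h']; auto. exfalso.
      apply (mcs_not_both _ (TTr p q) HD h). apply Hsub. right; left; exists p, q; auto.
  - apply Hsub. right; right; left; reflexivity.
  - intros chi h. apply Hsub. right; right; right; exists chi; auto.
Qed.
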